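(* Let $P$ be a non-constant polynomial with integer coefficients and positive leading coefficient. Then there exists a natural number $n$ such that $P(n)$ is not a practical number.
   Context: A positive integer $N$ is called a practical number if every integer in $[1,N]$ can be expressed as a sum of distinct positive divisors of $N$. *)

(* Defs.v *)
From mathcomp Require Import all_boot all_order all_algebra.
Set Implicit Arguments. Unset Strict Implicit. Unset Printing Implicit Defensive.
Import GRing.Theory Num.Theory.

(* N is practical: N >= 1 and every m in [1, N] is a sum of distinct positive
   divisors of N.  A set of distinct divisors is a subsequence of the
   (sorted, duplicate-free) list [divisors N]. *)
Definition practical (N : nat) : Prop :=
  0 < N /\
  forall m : nat, 1 <= m <= N ->
    exists s : seq nat, subseq s (divisors N) /\ sumn s = m.

Definition practicalz (z : int) : Prop :=
  (0 < z)%R /\ practical `|z|%N.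

(* Main.v *)
Require Import Defs.
From mathcomp Require Import all_boot all_order all_algebra.
From mathcomp Require Import zify ring.
Import Order.TTheory GRing.Theory Num.Theory.

Lemma mem_le_sumn (s : seq nat) x : x \in s -> x <= sumn s.
Proof.
elim: s => //= y s IH; rewrite inE => /orP[/eqP->|/IH]; first exact: leq_addr.
by move=> h; apply: leq_trans h (leq_addl _ _).
Qed.

Lemma sumn_sub_uniq (s t : seq nat) : uniq s -> {subset s <= t} ->
  sumn s <= sumn t.
Proof.
move=> us st; rewrite !sumnE.
apply: (sub_le_big_seq (op:=addn) (le:=leq) leqnn (fun x y => leq_addr y x)).
move=> i; rewrite count_uniq_mem //.
case: (boolP (i \in s)) => //= his.
by rewrite -has_count; apply/hasP; exists i; [exact: st his | by rewrite /= eqxx].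
Qed.

Lemma not_practical a k : 0 < a -> 0 < k ->
  ~ practical (a * (1 + (sumn (divisors a)).+1`! * k)).
Proof.
set m := (sumn (divisors a)).+1; set q := 1 + _ * k => a0 k0 [_ H].
have mq : m < q.
  rewrite /q add1n ltnS; apply: leq_trans (fact_geq m) _.
  by rewrite leq_pmulr.
have qa : m <= a * q by apply: leq_trans (ltnW mq) _; rewrite leq_pmull.
have [s [ss sm]] := H m (introT andP (conj (ltn0Sn _) qa)).
have us : uniq s := subseq_uniq ss (divisors_uniq _).
have : sumn s <= sumn (divisors a).
  apply: sumn_sub_uniq => // x xs.
  have xd : x \in divisors (a * q) := mem_subseq ss xs.
  have xm : x <= m by rewrite -sm mem_le_sumn.
  have N0 : 0 < a * q by rewrite muln_gt0 a0 (leq_trans _ mq).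
  have xdv : x %| a * q by rewrite dvdn_divisors.
  have x0 : 0 < x by case: x xdv {xd xs xm} => //; rewrite dvd0n => /eqP h; rewrite h in N0.

  have cq : coprime x q.
    apply: (@coprime_dvdl _ (m`!)); first by rewrite dvdn_fact ?x0.
    by rewrite /coprime /q (addnC 1) mulnC gcdnMDl gcdn1.
  rewrite -dvdn_divisors //.
  by move: xdv; rewrite Gauss_dvdl.
by rewrite sm ltnn.
Qed.

Local Open Scope ring_scope.

Lemma horner_split (P : {poly int}) x :
  P.[x] = P.[0] + x * (drop_poly 1 P).[x].
Proof.
rewrite -{1}(poly_take_drop 1 P) hornerD hornerM hornerXn expr1 mulrC.
rewrite horner_coef0 [take_poly 1 P]size1_polyC ?hornerC ?coef_take_poly //.
by apply: leq_trans (size_poly _ _) _.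
Qed.

Theorem proposition2p1 (P : {poly int}) :
  (1 < size P)%N -> 0 < lead_coef P ->
  exists n : nat, ~ practicalz P.[n%:R].
Proof.
move=> sP _.
have [a0|a0] := lerP P.[0] 0.
  by exists 0%N => -[h _]; move: h; rewrite mulr0n ltNge a0.
set a := `|P.[0]|%N.
have ea : P.[0] = a%:Z by rewrite /a gez0_abs // ltW.
have apos : (0 < a)%N by rewrite -ltz_nat -ea.
set L := (sumn (divisors a)).+1`!.
have Lpos : (0 < L)%N := fact_gt0 _.
set rs := [seq ((a * L * t)%N%:R : int) | t <- iota 0 (size P)].
set Q := P - (P.[0])%:P.
have sQ : size Q = size P.
  rewrite /Q size_addl // size_opp; apply: leq_ltn_trans sP.
  exact: size_polyC_leq1.
have Q0 : Q != 0 by rewrite -size_poly_eq0 sQ -lt0n (ltn_trans _ sP).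
have urs : uniq rs.
  rewrite map_inj_uniq ?iota_uniq // => t1 t2 /eqP.
  by rewrite eqr_nat eqn_pmul2l ?muln_gt0 ?apos ?fact_gt0 // => /eqP.
case: (boolP (all (root Q) rs)) => [allr | /allPn [r rin nr]].
  by have := max_poly_roots Q0 allr urs; rewrite size_map size_iota sQ ltnn.
case/mapP: rin => t _ er.
exists (a * L * t)%N.
have [h|h] := lerP P.[(a * L * t)%N%:R] 0.
  by move=> -[h2 _]; move: h2; rewrite ltNge h.
set y : int := t%:Z * (drop_poly 1 P).[(a * L * t)%N%:R].
have ePx : P.[(a * L * t)%N%:R] = a%:Z * (1 + L%:Z * y).
  rewrite horner_split ea /y; set D := (drop_poly 1 P).[_].
  rewrite [((a*L*t)%N)%:R]natrM [((a*L)%N)%:R]natrM !natz; ring.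
have h2 : a%:Z * (1 + L%:Z * y) != a%:Z.
  by rewrite -ePx -ea; move: nr; rewrite /root /Q hornerD hornerN hornerC er subr_eq0.
have h3 : 0 < 1 + L%:Z * y.
  by rewrite -(pmulr_rgt0 _ (_ : 0 < a%:Z)) ?ltz_nat // -ePx.
have h4 : y != 0 by apply: contraNneq h2 => ->; rewrite mulr0 addr0 mulr1.
have ypos : 0 < y by nia.
have ey : y = `|y|%N%:Z by rewrite gez0_abs // ltW.
have k0 : (0 < `|y|)%N by rewrite -ltz_nat -ey.
have e : a%:Z * (1 + L%:Z * `|y|%N%:Z) = (a * (1 + L * `|y|))%N%:Z.
  by rewrite PoszM PoszD PoszM.
move=> -[_]; rewrite ePx ey e absz_nat.
exact: not_practical.
Qed.
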